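(* Let $G$ be a plane graph with a face $f$ whose facial walk $v_1v_2\dots v_rv_1$ has length $r\ge3$, and let $G'$ be obtained from $G$ by attaching a web to $f$. Then (i) for any $u,v\in V(G)$, $\mathrm{dist}_{G'}(u,v)=\mathrm{dist}_G(u,v)$, and moreover no shortest $(u,v)$-path in $G'$ contains an inner vertex of the attached web; (ii) for every vertex $v$ of the attached web there is a vertex $u\in V(G)$ with $\mathrm{dist}_{G'}(u,v)\le r$.
   Context: For $r\ge3$, the web $W_r(v_1,\dots,v_r)$ is the graph constructed as follows: take vertices $v_1,\dots,v_r$ and $u$; for each $i\in\{1,\dots,r\}$ add a path $x^i_0x^i_1\dots x^i_r$ of length $r$ with $x^i_0=v_i$ and $x^i_r=u$; for each $j\in\{1,\dots,r-1\}$ add the cycle $x^1_jx^2_j\dots x^r_jx^1_j$; for each $i\in\{1,\dots,r\}$ and $j\in\{1,\dots,r-1\}$ add the edge $\{x^{i-1}_{j-1},x^i_j\}$, where indices are such that $x^0_j=x^r_j$. The inner vertices of the web are all its vertices other than $v_1,\dots,v_r$. Attaching a web to a face $f$ with facial walk $v_1\dots v_rv_1$ means adding a copy of $W_r(v_1,\dots,v_r)$ whose vertices $v_1,\dots,v_r$ are identified with the vertices of the facial walk (vertices may repeat in the walk) and drawing it inside $f$ without crossings, with the concentric cycles nested around the center $u$. Distances are unweighted shortest-path distances. *)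

(* Defs.v *)
From HB Require Import structures.
From mathcomp Require Import all_boot.
Set Implicit Arguments. Unset Strict Implicit. Unset Printing Implicit Defensive.

Definition simple_graph (T : finType) (e : rel T) : Prop :=
  symmetric e /\ irreflexive e.

Definition closed_walk (T : finType) (e : rel T) r (w : 'I_r -> T) : Prop :=
  forall i : 'I_r, e (w i) (w (ordS i)).

Definition is_dist (T : Type) (e : rel T) (x y : T) (d : nat) : Prop :=
  (exists p : seq T, path e x p /\ last x p = y /\ size p = d) /\
  (forall p : seq T, path e x p -> last x p = y -> d <= size p).

Definition layer (r : nat) := {j : 'I_r | 0 < val j}.

(* Vertex set of G' : old vertices (inl), inner web vertices x^i_j (inr (Some (i,j)))
   for j in 1..r-1, and the center u (inr None). *)
Definition Vtx (T : finType) (r : nat) : finType := (T + option ('I_r * layer r))%type.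

(* lab w i j = the vertex x^i_j of G' (x^i_0 = v_i = w i, x^i_r = u). *)
Definition lab (T : finType) r (w : 'I_r -> T) (i : 'I_r) (j : nat) : Vtx T r :=
  if j == 0 then inl (w i) else
  match insub j : option 'I_r with
  | Some k => match insub k : option (layer r) with
              | Some l => inr (Some (i, l))
              | None => inr None
              end
  | None => inr None
  end.

Definition webE (T : finType) r (w : 'I_r -> T) (x y : Vtx T r) : bool :=
  [exists i : 'I_r, exists j : 'I_r,
    [|| (x == lab w i j) && (y == lab w i j.+1),
        [&& 0 < val j, x == lab w i j & y == lab w (ordS i) j]
      | [&& 0 < val j, x == lab w (ord_pred i) j.-1 & y == lab w i j]]].

Definition attach_adj (T : finType) (e : rel T) r (w : 'I_r -> T) : rel (Vtx T r) :=
  fun x y => match x, y with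
             | inl a, inl b => e a b
             | _, _ => webE w x y || webE w y x
             end.

Definition is_old (T : finType) r (x : Vtx T r) : bool :=
  if x is inl _ then true else false.

(* Main.v *)
Require Import Defs.
From HB Require Import structures.
From mathcomp Require Import all_boot zify.
From Stdlib Require Import Classical_Prop.
Set Implicit Arguments. Unset Strict Implicit. Unset Printing Implicit Defensive.


Lemma lab_inl (T : finType) r (w : 'I_r -> T) i j t :
  lab w i j = inl t -> j = 0 /\ t = w i.
Proof.
rewrite /lab; case: eqP => [-> [<-] //|hj].
case: insubP => [k _ _|_] //; case: insubP => //.
Qed.

Lemma lab_small (T : finType) r (w : 'I_r -> T) i j :
  0 < j -> j < r -> exists l : layer r, val (val l) = j /\ lab w i j = inr (Some (i, l)).
Proof.
move=> j0 jr; rewrite /lab; case: eqP => [E|_]; first by rewrite E in j0.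
case: insubP => [k _ kE|]; last by rewrite jr.
case: insubP => [l _ lE|]; last by rewrite kE j0.
by exists l; rewrite lE kE.
Qed.

Lemma lab_big (T : finType) r (w : 'I_r -> T) i j :
  0 < j -> r <= j -> lab w i j = inr None.
Proof.
move=> j0 jr; rewrite /lab; case: eqP => [E|_]; first by rewrite E in j0.
case: insubP => [k kr kE|//]; exfalso; move: kr => /= kr; by rewrite ltnNge jr in kr.
Qed.

Lemma lab0 (T : finType) r (w : 'I_r -> T) i : lab w i 0 = inl (w i).
Proof. by []. Qed.

Definition ht (T : finType) r (x : Vtx T r) : nat :=
  match x with inl _ => 0 | inr (Some (_, l)) => val (val l) | inr None => r end.

Lemma ht_lab (T : finType) r (w : 'I_r -> T) i j : ht (lab w i j) = minn j r.
Proof.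
case: (posnP j) => [->|j0]; first by rewrite lab0 /= min0n.
case: (ltnP j r) => jr.
  by have [l [lE ->]] := lab_small w i j0 jr; rewrite /= lE; lia.
by rewrite lab_big //=; lia.
Qed.

Definition phi (T : finType) r (w : 'I_r -> T) (a0 : T) (x : Vtx T r) : T :=
  match x with inl t => t | inr (Some (i, _)) => w i | inr None => a0 end.
Definition phi' (T : finType) r (w : 'I_r -> T) (a0 : T) (x : Vtx T r) : T :=
  match x with inl t => t | inr (Some (i, l)) => w (iter (val (val l)) (@ord_pred r) i)
  | inr None => a0 end.

Lemma phi_lab (T : finType) r (w : 'I_r -> T) a0 i j : j < r ->
  phi w a0 (lab w i j) = w i /\ phi' w a0 (lab w i j) = w (iter j (@ord_pred r) i).
Proof.
move=> jr; case: (posnP j) => [->|j0]; first by rewrite lab0.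
by have [l [lE ->]] := lab_small w i j0 jr; rewrite /= lE.
Qed.


Lemma webE_cases (T : finType) r (w : 'I_r -> T) x y : webE w x y ->
  exists (i : 'I_r) (j : nat), j < r /\
   [\/ x = lab w i j /\ y = lab w i j.+1,
       [/\ 0 < j, x = lab w i j & y = lab w (ordS i) j] |
       [/\ 0 < j, x = lab w (ord_pred i) j.-1 & y = lab w i j]].
Proof.
move=> /existsP [i /existsP [j H]]; exists i, j; split => //.
case/or3P: H => [/andP [/eqP -> /eqP ->]|/and3P [? /eqP -> /eqP ->]|/and3P [? /eqP -> /eqP ->]].
- by constructor 1.
- by constructor 2.
- by constructor 3.
Qed.

Lemma lab_ltr (T : finType) r (w : 'I_r -> T) i j : lab w i j != inr None -> j < r.
Proof.
case: (posnP j) => [->|j0]; first by have := ltn_ord i; case: r w i => //.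
by case: (ltnP j r) => // jr; rewrite lab_big.
Qed.

Lemma cyc_edge (T : finType) (e : rel T) r (w : 'I_r -> T) z :
  closed_walk e w -> e (w (ord_pred z)) (w z).
Proof. by move=> cw; have := cw (ord_pred z); rewrite ord_predK. Qed.

Lemma web_proj (T : finType) (e : rel T) r (w : 'I_r -> T) a0 x y :
  closed_walk e w -> symmetric e -> webE w x y -> x != inr None -> y != inr None ->
  (phi w a0 x = phi w a0 y \/ e (phi w a0 x) (phi w a0 y)) /\
  (phi' w a0 x = phi' w a0 y \/ e (phi' w a0 x) (phi' w a0 y)).
Proof.
move=> cw es /webE_cases [i [j [jr H]]].
case: H => [[-> ->]|[j0 -> ->]|[j0 -> ->]] Hx Hy.
- have jr' := lab_ltr Hy.
  have [-> ->] := phi_lab w a0 i jr; have [-> ->] := phi_lab w a0 i jr'.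
  split; first by left. by right; rewrite iterS es; exact: (cyc_edge _ cw).
- have [-> ->] := phi_lab w a0 i jr; have [-> ->] := phi_lab w a0 (ordS i) jr.
  split; first by right; apply: cw.
  case: j j0 {jr Hx Hy} => // j _; rewrite [iter j.+1 _ (ordS i)]iterSr ordSK iterS.
  by right; exact: (cyc_edge _ cw).
- have jr' : j.-1 < r by lia.
  have [-> ->] := phi_lab w a0 (ord_pred i) jr'; have [-> ->] := phi_lab w a0 i jr.
  split; first by right; exact: (cyc_edge _ cw).
  by case: j j0 {jr jr' Hx Hy} => // j _; rewrite iterSr; left.
Qed.


Lemma web_proj2 (T : finType) (e : rel T) r (w : 'I_r -> T) a0 x y :
  closed_walk e w -> symmetric e -> webE w x y || webE w y x -> x != inr None -> y != inr None ->
  (phi w a0 x = phi w a0 y \/ e (phi w a0 x) (phi w a0 y)) /\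
  (phi' w a0 x = phi' w a0 y \/ e (phi' w a0 x) (phi' w a0 y)).
Proof.
move=> cw es /orP [H1|H1] Hx Hy; first exact: web_proj.
have [[E1|E1] [E2|E2]] := web_proj a0 cw es H1 Hy Hx;
   by split; [move: E1; rewrite es|move: E2; rewrite es]; auto.
Qed.

Lemma adj_proj (T : finType) (e : rel T) r (w : 'I_r -> T) a0 x y :
  closed_walk e w -> symmetric e -> attach_adj e w x y -> x != inr None -> y != inr None ->
  (phi w a0 x = phi w a0 y \/ e (phi w a0 x) (phi w a0 y)) /\
  (phi' w a0 x = phi' w a0 y \/ e (phi' w a0 x) (phi' w a0 y)).
Proof.
move=> cw es H Hx Hy.
case: x y H Hx Hy => [a|[[i l]|]] [b|[[i' l']|]] // H Hx Hy; try exact: web_proj2.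
by split; right.
Qed.

Lemma adj_ht (T : finType) (e : rel T) r (w : 'I_r -> T) x y :
  attach_adj e w x y -> ht y <= ht x + 1 /\ ht x <= ht y + 1.
Proof.
have gen x' y' : webE w x' y' -> ht y' <= ht x' + 1 /\ ht x' <= ht y' + 1.
  move=> /webE_cases [i [j [jr H]]].
  case: H => [[-> ->]|[j0 -> ->]|[j0 -> ->]]; rewrite !ht_lab; lia.
case: x y => [a|[[i l]|]] [b|[[i' l']|]] // H; try (case/orP: H => /gen; lia).
Qed.

Lemma webE_inl (T : finType) r (w : 'I_r -> T) x y a :
  webE w x y -> x = inl a \/ y = inl a -> exists i, a = w i.
Proof.
move=> /webE_cases [i [j [jr H]]] E.
case: H E => [[-> ->]|[j0 -> ->]|[j0 -> ->]] [/lab_inl [_ ->]|/lab_inl [_ ->]];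
  by eexists.
Qed.

Lemma adj_inl (T : finType) (e : rel T) r (w : 'I_r -> T) a y :
  ~~ is_old y -> attach_adj e w (inl a) y || attach_adj e w y (inl a) -> exists i, a = w i.
Proof.
case: y => [//|y] _ /= /orP [/orP [H|H]|/orP [H|H]]; apply: (webE_inl H); auto.
Qed.

Lemma collapse (T : finType) (e : rel T) r (w : 'I_r -> T) a0 a y :
  attach_adj e w (inl a) y -> ~~ is_old y -> y != inr None ->
  phi w a0 (inl a) = phi w a0 y \/ phi' w a0 (inl a) = phi' w a0 y.
Proof.
case: y => [//|y] H _ Hy; move: H; rewrite /attach_adj => /orP [] /webE_cases [i [j [jr H]]].
- case: H Hy => [[/esym/lab_inl [-> ->] ->]|[j0 /esym/lab_inl [E _]]|[j0 /esym/lab_inl [E ->] ->]] Hy.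
  + have r1 := lab_ltr Hy; have [-> _] := phi_lab w a0 i r1; by left.
  + by rewrite E in j0.
  + have j1 : j = 1 by lia.
    rewrite j1 in Hy jr *; have [_ ->] := phi_lab w a0 i jr; by right.
- case: H Hy => [[_ /esym/lab_inl [E _]]|[j0 _ /esym/lab_inl [E _]]|[j0 _ /esym/lab_inl [E _]]] Hy //;
  by rewrite E in j0.
Qed.


Lemma proj_path (V T : Type) (E : rel V) (e : rel T) (P : pred V) (f : V -> T) :
  (forall x y, P x -> P y -> E x y -> f x = f y \/ e (f x) (f y)) ->
  forall p x, P x -> all P p -> path E x p ->
  exists q, [/\ path e (f x) q, last (f x) q = f (last x p) & size q <= size p].
Proof.
move=> Hf; elim=> [|y p IH] x Px /=; first by move=> _ _; exists [::].
move=> /andP [Py Pp] /andP [Exy Hp].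
have [q [q1 q2 q3]] := IH y Py Pp Hp.
case: (Hf x y Px Py Exy) => [->|e1]; first by exists q; split => //; apply: leqW.
by exists (f y :: q); split => //=; rewrite e1.
Qed.

Lemma ht_path (T : finType) (e : rel T) r (w : 'I_r -> T) p x :
  path (attach_adj e w) x p ->
  ht (last x p) <= ht x + size p /\ ht x <= ht (last x p) + size p.
Proof.
elim: p x => [|y p IH] x /=; first by rewrite !addn0.
move=> /andP [/adj_ht [h1 h2] /IH [h3 h4]]; set L := ht (last y p) in h3 h4 *; set S := size p in h3 h4 *; clearbody L S; split; lia.
Qed.

Lemma iter_ordS_val r (i : 'I_r) n : val (iter n (@ordS r) i) = (i + n) %% r.
Proof.
elim: n => [|n IH]; first by rewrite addn0 modn_small.
by rewrite iterS /= IH -addn1 modnDml addn1 addnS.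
Qed.

Lemma cyc_walk_n (T : finType) (e : rel T) r (w : 'I_r -> T) :
  closed_walk e w -> forall n i,
  exists q, [/\ path e (w i) q, last (w i) q = w (iter n (@ordS r) i) & size q = n].
Proof.
move=> cw; elim=> [|n IH] i; first by exists [::].
have [q [q1 q2 q3]] := IH (ordS i).
by exists (w (ordS i) :: q); rewrite iterSr /= cw q1 q2 q3.
Qed.

Lemma cyc_walk (T : finType) (e : rel T) r (w : 'I_r -> T) :
  closed_walk e w -> forall i k : 'I_r,
  exists q, [/\ path e (w i) q, last (w i) q = w k & size q < r].
Proof.
move=> cw i k; have r0 : 0 < r by have := ltn_ord i; lia.
have [q [q1 q2 q3]] := cyc_walk_n cw ((k + (r - i)) %% r) i.
exists q; split => //; last by rewrite q3 ltn_mod.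
rewrite q2; congr (w _); apply: val_inj.
rewrite iter_ordS_val modnDmr.
have -> : i + (k + (r - i)) = k + r by have := ltn_ord i; lia.
by rewrite modnDr modn_small.
Qed.

Lemma split_old (T : finType) r (s : seq (Vtx T r)) : has (@is_old T r) s ->
  exists ex c rest, s = ex ++ inl c :: rest /\ all (predC (@is_old T r)) ex.
Proof.
elim: s => [//|[c|y] s IH] /=; first by move=> _; exists [::], c, s.
move=> /IH [ex [c [rest [-> H]]]]; by exists (inr y :: ex), c, rest.
Qed.


Lemma excursion (T : finType) (e : rel T) r (w : 'I_r -> T) a c ex :
  symmetric e -> closed_walk e w -> ex != [::] -> all (predC (@is_old T r)) ex ->
  path (attach_adj e w) (inl a) (rcons ex (inl c)) ->
  exists q, [/\ path e a q, last a q = c & size q <= size ex].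
Proof.
move=> es cw; case: ex => [//|v ex'] _ Hall.
move=> Hpath; have := Hpath; rewrite rcons_cons /= => /andP [Hav Hp].
have /andP [vno Hall'] := Hall.
case: (boolP (inr None \in v :: ex')) => Hu.
- have [i0 Ea] : exists i, a = w i by apply: (adj_inl (e := e) vno); apply/orP; left; exact: Hav.
  have [k Ec] : exists k, c = w k.
    move: Hp; rewrite rcons_path => /andP [_ Hl].
    have Hlin : last v ex' \in v :: ex' by exact: (mem_last v ex').
    have := allP Hall _ Hlin => /= Hlno.
    by apply: (adj_inl (e := e) Hlno); apply/orP; right; exact: Hl.
  have [q [q1 q2 q3]] := cyc_walk cw i0 k.
  exists q; rewrite Ea Ec; split => //.
  have -> : (size ex').+1 = size (v :: ex') by [].
  move: (v :: ex') Hu Hpath q3 => s Hu Hpath q3.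
  case/splitPr: Hu Hpath q3 => ex1 ex2.
  rewrite rcons_cat cat_path rcons_cons => /andP [P1 /andP [P2 _]] q3.
  have P3 : path (attach_adj e w) (inl a) (rcons ex1 (inr None)) by rewrite rcons_path P1 P2.
  have [h _] := ht_path P3; move: h; rewrite last_rcons size_rcons /= size_cat /=.
  lia.
- have nu : forall x, x \in v :: ex' -> x != inr None.
    by move=> x xin; apply: contraNneq Hu => <-.
  have Hvu := nu v (mem_head _ _).
  have Pall : all (fun x => x != inr None) (rcons ex' (inl c)).
    rewrite all_rcons /=; apply/allP => x xin; apply: nu; by rewrite in_cons xin orbT.
  have [E1|E1] := collapse a Hav vno Hvu.
  + have [q [q1 q2 q3]] := proj_path (P := fun x => x != inr None) (E := attach_adj e w)
        (f := phi w a) (fun x y Px Py Exy => proj1 (adj_proj a cw es Exy Px Py)) Hvu Pall Hp.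
    exists q; move: q1 q2 q3; rewrite -E1 last_rcons size_rcons /= => q1 q2 q3; by split.
  + have [q [q1 q2 q3]] := proj_path (P := fun x => x != inr None) (E := attach_adj e w)
        (f := phi' w a) (fun x y Px Py Exy => proj2 (adj_proj a cw es Exy Px Py)) Hvu Pall Hp.
    exists q; move: q1 q2 q3; rewrite -E1 last_rcons size_rcons /= => q1 q2 q3; by split.
Qed.


Lemma inl_walk (T : finType) (e : rel T) r (w : 'I_r -> T) a q :
  path e a q -> path (attach_adj e w) (inl a) (map inl q).
Proof. by elim: q a => //= b q IH a /andP [-> /IH]. Qed.

Lemma main_proj (T : finType) (e : rel T) r (w : 'I_r -> T) :
  symmetric e -> closed_walk e w -> forall n p a b, size p <= n ->
  path (attach_adj e w) (inl a) p -> last (inl a) p = inl b ->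
  exists q, [/\ path e a q, last a q = b, size q <= size p &
                (~~ all (@is_old T r) p -> size q < size p)].
Proof.
move=> es cw; elim=> [|n IH] [|x p] a b //=.
- by move=> _ _ [->]; exists [::].
- by move=> _ _ [->]; exists [::].
case: x => [c|y] Hs.
- move=> /andP [ac Hp] Hl.
  have [q [q1 q2 q3 q4]] := IH p c b Hs Hp Hl.
  by exists (c :: q); rewrite /= ac q1 q2 ltnS q3.
move=> Hpath Hl.
have Hpath' : path (attach_adj e w) (inl a) (inr y :: p) by [].
have Hl' : last (inl a) (inr y :: p) = inl b by [].
have : has (@is_old T r) (inr y :: p).
  apply/hasP; exists (inl b) => //; rewrite -Hl; exact: (mem_last (inr y) p).
case/split_old => ex [c [rest [Ep Hall]]].
have exn : ex != [::] by case: ex Ep {Hall}.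
move: Hpath' Hl' Hs; rewrite Ep cat_path last_cat /= => /andP [P1 /andP [P2 P3]] Hl2 Hs.
have P4 : path (attach_adj e w) (inl a) (rcons ex (inl c)) by rewrite rcons_path P1 P2.
have [q1 [q11 q12 q13]] := excursion es cw exn Hall P4.
have Hs' : size rest <= n.
  have Hsz := congr1 size Ep; rewrite size_cat /= in Hsz.
  have : 0 < size ex by case: (ex) exn.
  move=> h; move: Hs Hsz h.
  set S := size p; set S2 := size ex; set S3 := size rest; clearbody S S2 S3; lia.
have [q2 [q21 q22 q23 _]] := IH rest c b Hs' P3 Hl2.
exists (q1 ++ q2); rewrite cat_path q11 q12 q21 last_cat q12 q22 size_cat /=.
have Hsz := congr1 size Ep; rewrite size_cat /= in Hsz.
split => //; last move=> _; move: Hsz q13 q23.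
  all: set S := size p; set S2 := size ex; set S3 := size rest;
     set S4 := size q1; set S5 := size q2; clearbody S S2 S3 S4 S5; lia.
Qed.

Lemma min_dist (V : Type) (E : rel V) x y n :
  (exists p, [/\ path E x p, last x p = y & size p = n]) ->
  exists d, d <= n /\ is_dist E x y d.
Proof.
elim/ltn_ind: n => n IH [p [P1 P2 P3]].
case: (classic (exists p', [/\ path E x p', last x p' = y & size p' < n])).
  move=> [p' [Q1 Q2 Q3]].
  have [d [d1 d2]] := IH _ Q3 (ex_intro _ p' (And3 Q1 Q2 erefl)).
  by exists d; split => //; apply: leq_trans (ltnW Q3).
move=> H; exists n; split => //; split; first by exists p.
move=> p' Q1 Q2; rewrite leqNgt; apply/negP => lt; apply: H; by exists p'.
Qed.

Lemma adj_of_web (T : finType) (e : rel T) r (w : 'I_r -> T) x y :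
  webE w x y -> ~~ is_old y -> attach_adj e w x y.
Proof. by case: x y => [a|x] [b|y] //= H _; rewrite H. Qed.

Lemma web_walk (T : finType) (e : rel T) r (w : 'I_r -> T) i : forall n m, m + n <= r ->
  exists p, [/\ path (attach_adj e w) (lab w i m) p, last (lab w i m) p = lab w i (m + n)
              & size p = n].
Proof.
elim=> [|n IH] m Hmn; first by exists [::]; rewrite addn0.
have mr : m < r by lia.
have h1 : m.+1 + n <= r by rewrite addSnnS.
have [p [p1 p2 p3]] := IH m.+1 h1.
exists (lab w i m.+1 :: p); split => //=; last by rewrite p3.
  rewrite p1 andbT; apply: adj_of_web.
    by apply/existsP; exists i; apply/existsP; exists (Ordinal mr); rewrite !eqxx.
  by case E: (lab w i m.+1) => [t|//]; have [] := lab_inl E.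
by rewrite p2 addSnnS.
Qed.


Theorem lemma9 (T : finType) (e : rel T) (r : nat) (w : 'I_r -> T) :
  simple_graph e -> 3 <= r -> closed_walk e w ->
  (* (i) distances between old vertices are preserved ... *)
  (forall (a b : T) (d : nat),
      is_dist e a b d <-> is_dist (attach_adj e w) (inl a) (inl b) d) /\
  (* ... and no shortest path in G' uses an inner vertex of the web *)
  (forall (a b : T) (p : seq (Vtx T r)),
      path (attach_adj e w) (inl a) p -> last (inl a) p = inl b ->
      is_dist (attach_adj e w) (inl a) (inl b) (size p) ->
      all (@is_old T r) p) /\
  (* (ii) every web vertex is within distance r of some vertex of G *)
  (forall (i : 'I_r) (j : nat), j <= r ->
      exists (u : T) (d : nat),
        d <= r /\ is_dist (attach_adj e w) (inl u) (lab w i j) d).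
Proof.
move=> [es ei] r3 cw.
have MP p a b := main_proj es cw (leqnn (size p)) (p := p) (a := a) (b := b).
split; [|split].
- move=> a b d; split.
  + move=> [[p [P1 [P2 P3]]] Hmin]; split.
      exists (map inl p); split; first exact: inl_walk.
      by rewrite (last_map inl) P2 size_map.
    move=> p' Q1 Q2; have [q [q1 q2 q3 _]] := MP p' a b Q1 Q2.
    exact: leq_trans (Hmin q q1 q2) q3.
  + move=> [[p [P1 [P2 P3]]] Hmin].
    have [q [q1 q2 q3 _]] := MP p a b P1 P2.
    have h := Hmin (map inl q) (inl_walk w q1); rewrite (last_map inl) q2 size_map in h.
    have {}h := h erefl.
    split.
      exists q; do 2!split => //; apply/eqP; rewrite eqn_leq h -P3 q3 //.
    move=> q' Q1 Q2; have := Hmin (map inl q') (inl_walk w Q1).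
    by rewrite (last_map inl) Q2 size_map; apply.
- move=> a b p Hp Hl [_ Hmin]; apply/negPn/negP => Hn.
  have [q [q1 q2 q3 q4]] := MP p a b Hp Hl.
  have h := Hmin (map inl q) (inl_walk w q1); rewrite (last_map inl) q2 size_map in h.
  have {}h := h erefl.
  by move: (q4 Hn); rewrite ltnNge h.
- move=> i j jr.
  have [p [p1 p2 p3]] := web_walk e w i (m := 0) (n := j) jr.
  have [d [d1 d2]] := min_dist (ex_intro _ p (And3 p1 p2 p3)).
  exists (w i), d; split; first exact: leq_trans jr.
  exact: d2.
Qed.
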